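(* Let $p$ be a positive continuous even function on $(-1,1)$ such that no nontrivial solution $u$ of $u''+pu=0$ has more than one zero in $(-1,1)$, and let $F$ be the solution of $\mathcal{S}F=2p$ on $(-1,1)$ with $F(0)=0$, $F'(0)=1$, $F''(0)=0$. Let $\varphi:(-1,1)\to\mathbb{R}^n$ be a $C^3$ curve with $\varphi'(x)\neq 0$ for all $x$, normalized by $\varphi(0)=0$, $|\varphi'(0)|=1$ and $\langle\varphi'(0),\varphi''(0)\rangle=0$. If $S_1\varphi(x)\le 2p(x)$ for all $x\in(-1,1)$, then for all $x\in(-1,1)$: (a) $|\varphi'(x)|\le F'(x)$, and (b) $\dfrac{|\varphi'(x)|}{1+|\varphi(x)|^2}\le \dfrac{F'(x)}{1+F(x)^2}$.
   Context: For a real function $g$ with $g'\neq0$, the Schwarzian derivative is $\mathcal{S}g=(g''/g')'-\tfrac12(g''/g')^2$. Equivalently, $F(x)=\int_0^x u_0(t)^{-2}\,dt$, where $u_0$ is the solution of $u''+pu=0$ with $u_0(0)=1$, $u_0'(0)=0$; $u_0$ has no zeros on $(-1,1)$, and $F$ is odd, strictly increasing, with $F'>0$. For a $C^3$ curve $\varphi$ on an interval into $\mathbb{R}^n$ with $\varphi'\neq0$, the Ahlfors Schwarzian is $$S_1\varphi=\frac{\langle\varphi',\varphi'''\rangle}{|\varphi'|^2}-3\frac{\langle\varphi',\varphi''\rangle^2}{|\varphi'|^4}+\frac32\frac{|\varphi''|^2}{|\varphi'|^2},$$ where $\langle\cdot,\cdot\rangle$ is the Euclidean inner product and $|\cdot|$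 the Euclidean norm. *)

(* Defs.v *)
From Stdlib Require Import Reals.
Open Scope R_scope.

(* Points of R^n are represented as functions nat -> R; only the
   components 0..n-1 are meaningful. *)
Fixpoint dotn (n : nat) (u v : nat -> R) : R :=
  match n with
  | O => 0
  | S k => dotn k u v + u k * v k
  end.

Definition normn (n : nat) (u : nat -> R) : R := sqrt (dotn n u u).

Definition in_I (x : R) : Prop := -1 < x < 1.

Definition is_sol (p u u1 : R -> R) : Prop :=
  forall x, in_I x ->
    derivable_pt_lim u x (u1 x) /\ derivable_pt_lim u1 x (- (p x * u x)).

Definition disconjugate (p : R -> R) : Prop :=
  forall u u1, is_sol p u u1 ->
    (exists x, in_I x /\ u x <> 0) ->
    forall a b, in_I a -> in_I b -> u a = 0 -> u b = 0 -> a = b.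

(* Schwarzian of g at x, given g1 = g', g2 = g'' (with g1 x <> 0):
   S g (x) = (g''/g')'(x) - 1/2 (g''/g')(x)^2 equals s. *)
Definition schwarzian_is (g1 g2 : R -> R) (x s : R) : Prop :=
  exists d, derivable_pt_lim (fun t => g2 t / g1 t) x d /\
            s = d - / 2 * (g2 x / g1 x) ^ 2.

Definition ahlfors_S1 (n : nat) (v1 v2 v3 : nat -> R) : R :=
  dotn n v1 v3 / (normn n v1) ^ 2
  - 3 * (dotn n v1 v2) ^ 2 / (normn n v1) ^ 4
  + 3 / 2 * (normn n v2) ^ 2 / (normn n v1) ^ 2.

(* Main.v *)
Require Import Defs.
From Stdlib Require Import Reals Lra Lia Ranalysis5 Ratan.
Open Scope R_scope.

Lemma D_val f x l l' : derivable_pt_lim f x l -> l = l' -> derivable_pt_lim f x l'.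
Proof. intros H ->; exact H. Qed.
Lemma D_plus f g x a b : derivable_pt_lim f x a -> derivable_pt_lim g x b ->
  derivable_pt_lim (fun t => f t + g t) x (a + b).
Proof. apply derivable_pt_lim_plus. Qed.
Lemma D_minus f g x a b : derivable_pt_lim f x a -> derivable_pt_lim g x b ->
  derivable_pt_lim (fun t => f t - g t) x (a - b).
Proof. apply derivable_pt_lim_minus. Qed.
Lemma D_mult f g x a b : derivable_pt_lim f x a -> derivable_pt_lim g x b ->
  derivable_pt_lim (fun t => f t * g t) x (a * g x + f x * b).
Proof. apply derivable_pt_lim_mult. Qed.
Lemma D_div f g x a b : derivable_pt_lim f x a -> derivable_pt_lim g x b -> g x <> 0 ->
  derivable_pt_lim (fun t => f t / g t) x ((a * g x - b * f x) / (g x)²).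
Proof. apply derivable_pt_lim_div. Qed.
Lemma D_const c x : derivable_pt_lim (fun _ => c) x 0.
Proof. apply derivable_pt_lim_const. Qed.
Lemma D_id x : derivable_pt_lim (fun t => t) x 1.
Proof. apply derivable_pt_lim_id. Qed.
Lemma D_scal c f x a : derivable_pt_lim f x a -> derivable_pt_lim (fun t => c * f t) x (c * a).
Proof. intro H. apply (D_val _ _ (0 * f x + c * a)). apply (D_mult (fun _ => c) f). apply D_const. exact H. ring. Qed.
Lemma D_opp f x a : derivable_pt_lim f x a -> derivable_pt_lim (fun t => - f t) x (- a).
Proof. apply derivable_pt_lim_opp. Qed.
Lemma D_exp f x a : derivable_pt_lim f x a -> derivable_pt_lim (fun t => exp (f t)) x (exp (f x) * a).
Proof. intro H. apply (derivable_pt_lim_comp f exp). exact H. apply derivable_pt_lim_exp. Qed.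
Lemma D_ln f x a : derivable_pt_lim f x a -> 0 < f x -> derivable_pt_lim (fun t => ln (f t)) x (a / f x).
Proof. intros H P. apply (D_val _ _ (/ f x * a)). apply (derivable_pt_lim_comp f ln). exact H.
  apply derivable_pt_lim_ln; auto. field; lra. Qed.
Lemma D_cos f x a : derivable_pt_lim f x a -> derivable_pt_lim (fun t => cos (f t)) x (- sin (f x) * a).
Proof. intro H. apply (derivable_pt_lim_comp f cos). exact H. apply derivable_pt_lim_cos. Qed.
Lemma D_sin f x a : derivable_pt_lim f x a -> derivable_pt_lim (fun t => sin (f t)) x (cos (f x) * a).
Proof. intro H. apply (derivable_pt_lim_comp f sin). exact H. apply derivable_pt_lim_sin. Qed.
Lemma D_cont f x l : derivable_pt_lim f x l -> continuity_pt f x.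
Proof. intro H. apply derivable_continuous_pt. exists l. exact H. Qed.

Lemma D_dotn n f g f' g' x :
  (forall i, (i < n)%nat -> derivable_pt_lim (fun t => f t i) x (f' i)) ->
  (forall i, (i < n)%nat -> derivable_pt_lim (fun t => g t i) x (g' i)) ->
  derivable_pt_lim (fun t => dotn n (f t) (g t)) x (dotn n f' (g x) + dotn n (f x) g').
Proof.
  induction n as [|k IH]; intros Hf Hg; simpl.
  - apply (D_val _ _ 0). apply D_const. ring.
  - apply (D_val _ _ ((dotn k f' (g x) + dotn k (f x) g') + (f' k * g x k + f x k * g' k))).
    apply D_plus. apply IH; intros; [apply Hf|apply Hg]; lia.
    apply (D_mult (fun t => f t k) (fun t => g t k)); [apply Hf|apply Hg]; lia.
    ring.
Qed.

Lemma dotn_sym n u v : dotn n u v = dotn n v u.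
Proof. induction n; simpl; [ring| rewrite IHn; ring]. Qed.
Lemma dotn_lin n a b u v w : dotn n (fun i => a * u i + b * v i) w = a * dotn n u w + b * dotn n v w.
Proof. induction n; simpl; [ring| rewrite IHn; ring]. Qed.
Lemma dotn_ext n u u' v v' : (forall i, (i < n)%nat -> u i = u' i) -> (forall i, (i < n)%nat -> v i = v' i) ->
  dotn n u v = dotn n u' v'.
Proof. induction n; intros Hu Hv; simpl; auto. rewrite IHn by (intros; apply Hu || apply Hv; lia).
  rewrite Hu, Hv by lia. ring. Qed.
Lemma dotn_zero n u v : (forall i, (i < n)%nat -> u i = 0) -> dotn n u v = 0.
Proof. induction n; intros Hu; simpl; auto. rewrite IHn by (intros; apply Hu; lia). rewrite Hu by lia. ring. Qed.
Lemma dotn_opp n u v : dotn n (fun i => - u i) v = - dotn n u v.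
Proof. induction n; simpl; [ring| rewrite IHn; ring]. Qed.
Lemma dotn_nonneg n u : 0 <= dotn n u u.
Proof. induction n; simpl; [lra| nra]. Qed.
Lemma dotn_pos n u : (exists i, (i < n)%nat /\ u i <> 0) -> 0 < dotn n u u.
Proof. induction n; intros [i [Hi Hu]]; [lia|]. simpl.
  destruct (Nat.eq_dec i n) as [->|Hne].
  - pose proof (dotn_nonneg n u). assert (0 < u n * u n) by (apply Rsqr_pos_lt; auto). lra.
  - assert (0 < dotn n u u) by (apply IHn; exists i; split; [lia|auto]). nra.
Qed.
Lemma CS n a v : 0 < dotn n a a -> (dotn n a v)^2 <= dotn n a a * dotn n v v.
Proof. intros Ha. set (t := dotn n a v / dotn n a a).
  pose proof (dotn_nonneg n (fun i => 1 * v i + (- t) * a i)) as H.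
  rewrite dotn_lin in H. rewrite (dotn_sym n v), (dotn_sym n a) in H.
  rewrite !dotn_lin in H. rewrite (dotn_sym n v a) in H.
  assert (E : dotn n a v = t * dotn n a a) by (unfold t; field; lra).
  rewrite E in H |- *. nra.
Qed.
Lemma normn_sq n u : normn n u ^ 2 = dotn n u u.
Proof. unfold normn. rewrite <- Rsqr_pow2. apply Rsqr_sqrt, dotn_nonneg. Qed.

Lemma mono f f' a b : a <= b -> (forall c, a <= c <= b -> derivable_pt_lim f c (f' c)) ->
  (forall c, a <= c <= b -> 0 <= f' c) -> f a <= f b.
Proof. intros Hab Hd Hp. destruct (Req_dec a b) as [->|Hne]; [lra|].
  destruct (MVT_cor2 f f' a b) as [c [E Hc]]; [lra|auto|].
  assert (0 <= f' c) by (apply Hp; lra). nra. Qed.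
Lemma smono f f' a b : a < b -> (forall c, a <= c <= b -> derivable_pt_lim f c (f' c)) ->
  (forall c, a <= c <= b -> 0 < f' c) -> f a < f b.
Proof. intros Hab Hd Hp.
  destruct (MVT_cor2 f f' a b) as [c [E Hc]]; [lra|auto|].
  assert (0 < f' c) by (apply Hp; lra). nra. Qed.

Lemma sturm x0 v v1 u u1 q p : 0 <= x0 ->
  (forall t, 0 <= t <= x0 -> derivable_pt_lim v t (v1 t) /\ derivable_pt_lim v1 t (- (q t * v t)) /\
     derivable_pt_lim u t (u1 t) /\ derivable_pt_lim u1 t (- (p t * u t)) /\
     0 < u t /\ 0 <= v t /\ q t <= p t) ->
  v 0 = u 0 -> v1 0 = u1 0 -> u x0 <= v x0.
Proof. intros Hx H E0 E1.
  assert (HW : forall t, 0 <= t <= x0 -> 0 <= v1 t * u t - v t * u1 t).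
  { intros t Ht. replace 0 with (v1 0 * u 0 - v 0 * u1 0) by (rewrite E0, E1; ring).
    apply (mono (fun t => v1 t * u t - v t * u1 t) (fun t => (p t - q t) * v t * u t)); [lra| |].
    - intros c Hc. destruct (H c ltac:(lra)) as (a1&a2&a3&a4&_).
      eapply D_val. apply D_minus; apply D_mult; eauto. ring.
    - intros c Hc. destruct (H c ltac:(lra)) as (_&_&_&_&a5&a6&a7).
      apply Rmult_le_pos; [apply Rmult_le_pos|]; lra. }
  assert (Hu0 : 0 < u 0) by (apply H; lra). assert (Hux : 0 < u x0) by (apply H; lra).
  assert (Hr : v 0 / u 0 <= v x0 / u x0).
  { apply (mono (fun t => v t / u t) (fun t => (v1 t * u t - u1 t * v t) / (u t)²)); [lra| |].
    - intros c Hc. destruct (H c ltac:(lra)) as (a1&a2&a3&a4&a5&_).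
      apply D_div; auto; lra.
    - intros c Hc. destruct (H c ltac:(lra)) as (_&_&_&_&a5&_).
      specialize (HW c Hc). assert (0 < (u c)²) by (apply Rsqr_pos_lt; lra). unfold Rdiv. apply Rmult_le_pos; [lra|]. left; apply Rinv_0_lt_compat; lra. }
  rewrite E0 in Hr. unfold Rdiv in Hr. rewrite Rinv_r in Hr by lra.
  apply (Rmult_le_compat_r (u x0)) in Hr; [|lra]. rewrite Rmult_1_l in Hr.
  rewrite Rmult_assoc, Rinv_l, Rmult_1_r in Hr by lra. exact Hr.
Qed.

Lemma exp_sq x : exp x ^ 2 = exp (2 * x).
Proof. replace (2 * x) with (x + x) by ring. rewrite exp_plus. ring. Qed.
Lemma L_u0sq a : 0 < a -> exp (- ln a / 2) ^ 2 = / a.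
Proof. intro H. rewrite exp_sq. replace (2 * (- ln a / 2)) with (- ln a) by field.
  rewrite exp_Ropp, exp_ln; auto. Qed.
Lemma L_we4 a : 0 < a -> exp (- ln a / 4) ^ 4 = / a.
Proof. intro H. replace (exp (- ln a / 4) ^ 4) with ((exp (- ln a / 4) ^ 2) ^ 2) by ring.
  rewrite !exp_sq. replace (2 * (2 * (- ln a / 4))) with (- ln a) by field.
  rewrite exp_Ropp, exp_ln; auto. Qed.
Lemma L_m A B : 0 < A -> 0 <= B -> exp (-2 * (ln (1 + B) / 2 - ln A / 4)) = sqrt A / (1 + B).
Proof. intros HA HB.
  replace (-2 * (ln (1 + B) / 2 - ln A / 4)) with (- ln (1 + B) + ln A / 2) by field.
  rewrite exp_plus, exp_Ropp, exp_ln by lra.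
  assert (exp (ln A / 2) = sqrt A).
  { rewrite <- (sqrt_Rsqr (exp (ln A / 2))) by (left; apply exp_pos).
    f_equal. unfold Rsqr. rewrite <- exp_plus. replace (ln A / 2 + ln A / 2) with (ln A) by field.
    apply exp_ln; auto. }
  rewrite H. field. lra. Qed.
Lemma L_wm E : exp E ^ 2 * exp (-2 * E) = 1.
Proof. rewrite exp_sq, <- exp_plus. replace (2 * E + -2 * E) with 0 by ring. apply exp_0. Qed.

Lemma key_sph A B C G bb bc a3 p : 0 < A -> 0 <= B ->
  (G + 2 * A / (1 + B) * C)^2 <= A * (bb + 2 * (2 * A / (1 + B)) * bc + (2 * A / (1 + B))^2 * B) ->
  a3 / A - 3 * G^2 / A^2 + 3/2 * bb / A <= 2 * p ->
  A / (1 + B)^2 - (C / (1 + B) - G / (2 * A))^2 -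
  (((A + bc) * (1 + B) - 2 * C^2) / (1 + B)^2 - ((bb + a3) * A - 2 * G^2) / (2 * A^2)) <= p.
Proof. intros HA HB HC HS. set (k := 2 * A / (1 + B)) in *.
  assert (E : (a3 / A - 3 * G^2 / A^2 + 3/2 * bb / A) / 2 - (A / (1 + B)^2 - (C / (1 + B) - G / (2 * A))^2 -
  (((A + bc) * (1 + B) - 2 * C^2) / (1 + B)^2 - ((bb + a3) * A - 2 * G^2) / (2 * A^2)))
     = (A * (bb + 2 * k * bc + k^2 * B) - (G + k * C)^2) / (4 * A^2)).
  { unfold k. field. lra. }
  assert (0 <= (A * (bb + 2 * k * bc + k^2 * B) - (G + k * C)^2) / (4 * A^2)).
  { apply Rmult_le_pos. lra. left. apply Rinv_0_lt_compat. nra. }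
  lra.
Qed.
Lemma key_euc A G bb a3 p : 0 < A -> G^2 <= A * bb ->
  a3 / A - 3 * G^2 / A^2 + 3/2 * bb / A <= 2 * p ->
  - (- G / (2 * A))^2 - (- (((bb + a3) * A - 2 * G^2) / (2 * A^2))) <= p.
Proof. intros HA HC HS.
  assert (E : (a3 / A - 3 * G^2 / A^2 + 3/2 * bb / A) / 2 - (- (- G / (2 * A))^2 - (- (((bb + a3) * A - 2 * G^2) / (2 * A^2))))
     = (A * bb - G^2) / (4 * A^2)).
  { field. lra. }
  assert (0 <= (A * bb - G^2) / (4 * A^2)).
  { apply Rmult_le_pos. lra. left. apply Rinv_0_lt_compat. nra. }
  lra.
Qed.

Lemma main_pos
  (p : R -> R)
  (F F1 F2 : R -> R)
  (hF1 : forall x, in_I x -> derivable_pt_lim F x (F1 x))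
  (hF2 : forall x, in_I x -> derivable_pt_lim F1 x (F2 x))
  (hF1nz : forall x, in_I x -> F1 x <> 0)
  (hFS : forall x, in_I x -> schwarzian_is F1 F2 x (2 * p x))
  (hF0 : F 0 = 0) (hF10 : F1 0 = 1) (hF20 : F2 0 = 0)
  (n : nat) (phi phi1 phi2 phi3 : R -> nat -> R)
  (hphi1 : forall i, (i < n)%nat -> forall x, in_I x ->
     derivable_pt_lim (fun t => phi t i) x (phi1 x i))
  (hphi2 : forall i, (i < n)%nat -> forall x, in_I x ->
     derivable_pt_lim (fun t => phi1 t i) x (phi2 x i))
  (hphi3 : forall i, (i < n)%nat -> forall x, in_I x ->
     derivable_pt_lim (fun t => phi2 t i) x (phi3 x i))
  (hphi1nz : forall x, in_I x -> exists i, (i < n)%nat /\ phi1 x i <> 0)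
  (hphi0 : forall i, (i < n)%nat -> phi 0 i = 0)
  (hphi10 : normn n (phi1 0) = 1)
  (hphi120 : dotn n (phi1 0) (phi2 0) = 0)
  (hS1 : forall x, in_I x ->
     ahlfors_S1 n (phi1 x) (phi2 x) (phi3 x) <= 2 * p x)
  (x0 : R) (hx0 : 0 <= x0 < 1) :
    normn n (phi1 x0) <= F1 x0 /\
    normn n (phi1 x0) / (1 + normn n (phi x0) ^ 2) <= F1 x0 / (1 + F x0 ^ 2).
Proof.
  assert (F1pos : forall t, in_I t -> 0 < F1 t).
  { intros t Ht. destruct (Rlt_le_dec 0 (F1 t)) as [|Hle]; auto.
    assert (Hlt : F1 t < 0) by (destruct Hle; auto; exfalso; apply (hF1nz t Ht); auto).
    exfalso. unfold in_I in Ht.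
    destruct (Rtotal_order t 0) as [Hn|[Hz|Hp]].
    - assert (Hc : forall a, t <= a <= 0 -> continuity_pt F1 a).
      { intros a Ha. apply (D_cont _ _ _ (hF2 a ltac:(unfold in_I; lra))). }
      destruct (IVT_interv F1 t 0 Hc ltac:(lra) Hlt ltac:(lra)) as [z [Hz Ez]].
      apply (hF1nz z); auto. unfold in_I; lra.
    - subst; lra.
    - assert (Hc : forall a, 0 <= a <= t -> continuity_pt (fun s => - F1 s) a).
      { intros a Ha. apply (D_cont _ _ _ (D_opp _ _ _ (hF2 a ltac:(unfold in_I; lra)))). }
      destruct (IVT_interv (fun s => - F1 s) 0 t Hc ltac:(lra) ltac:(lra) ltac:(lra)) as [z [Hz Ez]].
      apply (hF1nz z). unfold in_I; lra. lra. }
  assert (IN : forall t, 0 <= t <= x0 -> in_I t) by (intros; unfold in_I; lra).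
  pose (A := fun t => dotn n (phi1 t) (phi1 t)).
  pose (B := fun t => dotn n (phi t) (phi t)).
  pose (C := fun t => dotn n (phi t) (phi1 t)).
  pose (G := fun t => dotn n (phi1 t) (phi2 t)).
  pose (bc := fun t => dotn n (phi t) (phi2 t)).
  pose (bb := fun t => dotn n (phi2 t) (phi2 t)).
  pose (a3 := fun t => dotn n (phi1 t) (phi3 t)).
  assert (Apos : forall t, in_I t -> 0 < A t) by (intros; apply dotn_pos; auto).
  assert (Bnn : forall t, 0 <= B t) by (intros; apply dotn_nonneg).
  assert (dA : forall t, in_I t -> derivable_pt_lim A t (2 * G t)).
  { intros t Ht. eapply D_val. apply (D_dotn n phi1 phi1 (phi2 t) (phi2 t)); intros; apply hphi2; auto.
    unfold G; rewrite (dotn_sym n (phi2 t)); ring. }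
  assert (dB : forall t, in_I t -> derivable_pt_lim B t (2 * C t)).
  { intros t Ht. eapply D_val. apply (D_dotn n phi phi (phi1 t) (phi1 t)); intros; apply hphi1; auto.
    unfold C; rewrite (dotn_sym n (phi1 t)); ring. }
  assert (dC : forall t, in_I t -> derivable_pt_lim C t (A t + bc t)).
  { intros t Ht. eapply D_val. apply (D_dotn n phi phi1 (phi1 t) (phi2 t)); intros; [apply hphi1|apply hphi2]; auto. reflexivity. }
  assert (dG : forall t, in_I t -> derivable_pt_lim G t (bb t + a3 t)).
  { intros t Ht. eapply D_val. apply (D_dotn n phi1 phi2 (phi2 t) (phi3 t)); intros; [apply hphi2|apply hphi3]; auto. reflexivity. }
  pose (Rd := fun t => C t / (1 + B t) - G t / (2 * A t)).
  pose (Rd' := fun t => ((A t + bc t) * (1 + B t) - 2 * C t ^ 2) / (1 + B t) ^ 2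
                        - ((bb t + a3 t) * A t - 2 * G t ^ 2) / (2 * A t ^ 2)).
  assert (dR : forall t, in_I t -> derivable_pt_lim Rd t (Rd' t)).
  { intros t Ht. pose proof (Apos t Ht). pose proof (Bnn t).
    eapply D_val. apply D_minus; apply D_div.
    apply dC; auto. apply D_plus. apply D_const. apply dB; auto. lra.
    apply dG; auto. apply D_scal. apply dA; auto. lra.
    unfold Rd', Rsqr. field. lra. }
  pose (E := fun t => ln (1 + B t) / 2 - ln (A t) / 4).
  assert (dE : forall t, in_I t -> derivable_pt_lim E t (Rd t)).
  { intros t Ht. pose proof (Apos t Ht). pose proof (Bnn t).
    eapply D_val. apply D_minus; apply (D_div (fun t => ln _) (fun _ => _)).
    apply D_ln. apply D_plus. apply D_const. apply dB; auto. lra. apply D_const. lra.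
    apply D_ln. apply dA; auto. lra. apply D_const. lra.
    unfold Rd, Rsqr. field. lra. }
  pose (w := fun t => exp (E t)).
  pose (m := fun t => exp (-2 * E t)).
  assert (dw : forall t, in_I t -> derivable_pt_lim w t (w t * Rd t)).
  { intros t Ht. apply D_exp. apply dE; auto. }
  assert (dm : forall t, in_I t -> derivable_pt_lim m t (-2 * Rd t * m t)).
  { intros t Ht. eapply D_val. apply D_exp. apply D_scal. apply dE; auto. unfold m; ring. }
  assert (m_eq : forall t, in_I t -> m t = sqrt (A t) / (1 + B t)).
  { intros t Ht. apply L_m; auto. }
  assert (m_sq : forall t, in_I t -> m t ^ 2 = A t / (1 + B t) ^ 2).
  { intros t Ht. rewrite m_eq by auto. pose proof (Apos t Ht). pose proof (Bnn t).
    unfold Rdiv. rewrite Rpow_mult_distr. rewrite <- Rsqr_pow2, Rsqr_sqrt by lra.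
    rewrite pow_inv. reflexivity. }
  assert (wm : forall t, w t ^ 2 * m t = 1) by (intros; apply L_wm).
  pose (Y := fun t => F2 t / F1 t).
  pose (u0 := fun t => exp (- ln (F1 t) / 2)).
  pose (u0' := fun t => - (u0 t * Y t) / 2).
  assert (du0 : forall t, in_I t -> derivable_pt_lim u0 t (u0' t)).
  { intros t Ht. pose proof (F1pos t Ht). eapply D_val. apply D_exp.
    apply (D_div (fun t => - ln (F1 t)) (fun _ => 2)). apply D_opp. apply D_ln. apply hF2; auto. auto.
    apply D_const. lra. unfold u0', Y, u0, Rsqr. field. lra. }
  assert (du0' : forall t, in_I t -> derivable_pt_lim u0' t (- (p t * u0 t))).
  { intros t Ht. pose proof (F1pos t Ht). destruct (hFS t Ht) as [d [Hd Hs]].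
    eapply D_val. apply (D_div (fun t => - (u0 t * Y t)) (fun _ => 2)). apply D_opp.
    apply D_mult. apply du0; auto. exact Hd. apply D_const. lra.
    assert (p t = (d - / 2 * Y t ^ 2) / 2) by (unfold Y; lra). rewrite H0.
    unfold u0', Rsqr. field. }
  pose (U := fun t => u0 t * F t).
  pose (U' := fun t => u0' t * F t + u0 t * F1 t).
  assert (dU : forall t, in_I t -> derivable_pt_lim U t (U' t)).
  { intros t Ht. apply D_mult; auto. }
  assert (dU' : forall t, in_I t -> derivable_pt_lim U' t (- (p t * U t))).
  { intros t Ht. pose proof (F1pos t Ht). eapply D_val. apply D_plus; apply D_mult; auto.
    unfold U, u0', Y. field. lra. }
  assert (u0pos : forall t, 0 < u0 t) by (intros; apply exp_pos).
  assert (u0_0 : u0 0 = 1) by (unfold u0; rewrite hF10, ln_1; replace (- 0 / 2) with 0 by field; apply exp_0).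
  assert (u0'_0 : u0' 0 = 0) by (unfold u0', Y; rewrite hF20, hF10; field).
  assert (Fnn : forall t, 0 <= t <= x0 -> 0 <= F t).
  { intros t Ht. rewrite <- hF0. apply (mono F F1); try lra.
    intros c Hc; apply hF1, IN; lra. intros c Hc; left; apply F1pos, IN; lra. }
  assert (A0 : A 0 = 1) by (unfold A; rewrite <- normn_sq, hphi10; ring).
  assert (B0 : B 0 = 0) by (unfold B; apply dotn_zero; auto).
  assert (C0 : C 0 = 0) by (unfold C; apply dotn_zero; auto).
  assert (E0 : E 0 = 0) by (unfold E; rewrite A0, B0, Rplus_0_r, ln_1; field).
  assert (R0 : Rd 0 = 0) by (unfold Rd; fold (G 0); unfold G; rewrite C0, hphi120, A0, B0; field).
  assert (w0 : w 0 = 1) by (unfold w; rewrite E0; apply exp_0).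
  assert (m0 : m 0 = 1) by (unfold m; rewrite E0; replace (-2 * 0) with 0 by ring; apply exp_0).
  assert (S1f : forall t, in_I t -> a3 t / A t - 3 * G t ^ 2 / A t ^ 2 + 3/2 * bb t / A t <= 2 * p t).
  { intros t Ht. pose proof (hS1 t Ht) as H. unfold ahlfors_S1 in H.
    replace (normn n (phi1 t) ^ 4) with ((normn n (phi1 t) ^ 2) ^ 2) in H by ring.
    rewrite !normn_sq in H. exact H. }
  pose (we := fun t => exp (- ln (A t) / 4)).
  pose (Re := fun t => - G t / (2 * A t)).
  pose (Re' := fun t => - (((bb t + a3 t) * A t - 2 * G t ^ 2) / (2 * A t ^ 2))).
  pose (qe := fun t => - Re t ^ 2 - Re' t).
  pose (ve' := fun t => we t * Re t).
  assert (dwe : forall t, in_I t -> derivable_pt_lim we t (ve' t)).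
  { intros t Ht. pose proof (Apos t Ht). eapply D_val. apply D_exp.
    apply (D_div (fun t => - ln (A t)) (fun _ => 4)). apply D_opp. apply D_ln. apply dA; auto. auto.
    apply D_const. lra. unfold ve', we, Re, Rsqr. field. lra. }
  assert (dRe : forall t, in_I t -> derivable_pt_lim Re t (Re' t)).
  { intros t Ht. pose proof (Apos t Ht). eapply D_val. apply (D_div (fun t => - G t)).
    apply D_opp, dG; auto. apply D_scal, dA; auto. lra. unfold Re', Rsqr. field. lra. }
  assert (partA : sqrt (A x0) <= F1 x0).
  { assert (H : u0 x0 <= we x0).
    { apply (sturm x0 we ve' u0 u0' qe p). lra.
      intros t Ht. pose proof (IN t Ht) as Hi. repeat split; auto.
      - eapply D_val. apply D_mult; auto. unfold qe, ve'. ring.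
      - left; apply exp_pos.
      - apply key_euc. apply Apos; auto. apply CS. apply Apos; auto. apply S1f; auto.
      - unfold we. rewrite A0, ln_1. replace (- 0 / 4) with 0 by field. rewrite exp_0; auto.
      - unfold ve', Re. fold (G 0). unfold G. rewrite hphi120, u0'_0, A0. field. }
    pose proof (Apos x0 (IN x0 ltac:(lra))) as HA. pose proof (F1pos x0 (IN x0 ltac:(lra))) as HF.
    assert (H4 : u0 x0 ^ 4 <= we x0 ^ 4) by (apply pow_incr; split; [left; apply u0pos|exact H]).
    unfold we in H4. rewrite L_we4 in H4 by auto.
    replace (u0 x0 ^ 4) with ((u0 x0 ^ 2) ^ 2) in H4 by ring. unfold u0 in H4. rewrite L_u0sq in H4 by auto.
    assert (A x0 <= F1 x0 ^ 2).
    { rewrite pow_inv in H4. apply Rinv_le_contravar in H4. rewrite !Rinv_inv in H4. exact H4.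
      apply Rinv_0_lt_compat; auto. apply pow_lt; auto. }
    rewrite <- (sqrt_Rsqr (F1 x0)) by lra. apply sqrt_le_1. lra. apply Rle_0_sqr. rewrite Rsqr_pow2; auto. }
  assert (mpos : forall t, 0 < m t) by (intros; apply exp_pos).
  assert (wpos : forall t, 0 < w t) by (intros; apply exp_pos).
  assert (hle : 0 <= x0) by lra.
  assert (Cm : forall x, 0 <= x <= x0 -> continuity_pt m x).
  { intros x Hx. apply (D_cont _ _ _ (dm x (IN x Hx))). }
  pose (P := primitive hle (FTC_P1 hle Cm)).
  pose (h := fun t => P t - P 0).
  assert (dh : forall t, 0 <= t <= x0 -> derivable_pt_lim h t (m t)).
  { intros t Ht. eapply D_val. apply D_minus. apply (RiemannInt_P28 hle Cm Ht). apply D_const. ring. }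
  assert (h0 : h 0 = 0) by (unfold h; ring).
  assert (hmono : forall a b, 0 <= a -> a <= b -> b <= x0 -> h a <= h b).
  { intros a b Ha Hab Hb. apply (mono h m); auto. intros c Hc; apply dh; lra.
    intros c Hc; left; auto. }
  pose (th := atan (F x0)).
  assert (thb : - PI / 2 < th < PI / 2) by apply atan_bound.
  assert (ctpos : 0 < cos th) by (apply cos_gt_0; lra).
  assert (Fx0 : 0 <= F x0) by (apply Fnn; lra).
  assert (sq1 : 0 < sqrt (1 + (F x0)²)) by (apply sqrt_lt_R0; pose proof (Rle_0_sqr (F x0)); lra).
  assert (stnn : 0 <= sin th).
  { unfold th. rewrite sin_atan. unfold Rdiv. apply Rmult_le_pos; auto. left; apply Rinv_0_lt_compat; auto. }
  pose (v := fun t => w t * cos (h t - th)).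
  pose (v' := fun t => w t * (Rd t * cos (h t - th) - m t * sin (h t - th))).
  pose (q := fun t => m t ^ 2 - Rd t ^ 2 - Rd' t).
  assert (dv : forall t, 0 <= t <= x0 -> derivable_pt_lim v t (v' t)).
  { intros t Ht. eapply D_val. apply D_mult. apply dw, IN; auto.
    apply D_cos. apply D_minus. apply dh; auto. apply D_const. unfold v'. ring. }
  assert (dv' : forall t, 0 <= t <= x0 -> derivable_pt_lim v' t (- (q t * v t))).
  { intros t Ht. eapply D_val. apply D_mult. apply dw, IN; auto.
    apply D_minus; apply D_mult. apply dR, IN; auto.
    apply D_cos. apply D_minus. apply dh; auto. apply D_const.
    apply dm, IN; auto.
    apply D_sin. apply D_minus. apply dh; auto. apply D_const. unfold q, v. ring. }
  assert (qp : forall t, in_I t -> q t <= p t).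
  { intros t Ht. unfold q. rewrite m_sq by auto. apply key_sph.
    apply Apos; auto. apply Bnn.
    2: apply S1f; auto.
    set (k := 2 * A t / (1 + B t)).
    pose proof (CS n (phi1 t) (fun i => 1 * phi2 t i + k * phi t i) (Apos t Ht)) as H.
    set (V := fun i => 1 * phi2 t i + k * phi t i) in H.
    assert (E1 : dotn n (phi1 t) V = G t + k * C t).
    { rewrite dotn_sym. unfold V. rewrite dotn_lin. unfold G, C. rewrite (dotn_sym n (phi2 t) (phi1 t)). ring. }
    assert (E2 : dotn n V V = bb t + 2 * k * bc t + k ^ 2 * B t).
    { unfold V at 1. rewrite dotn_lin. rewrite (dotn_sym n (phi2 t)), (dotn_sym n (phi t)). unfold V. rewrite !dotn_lin.
      unfold bb, bc, B. rewrite (dotn_sym n (phi2 t) (phi t)). ring. }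
    rewrite E1, E2 in H. fold (A t) in H.
    exact H. }
  pose (ut := fun t => cos th * u0 t + sin th * U t).
  pose (ut' := fun t => cos th * u0' t + sin th * U' t).
  assert (dut : forall t, in_I t -> derivable_pt_lim ut t (ut' t)).
  { intros t Ht. apply D_plus; apply D_scal; auto. }
  assert (dut' : forall t, in_I t -> derivable_pt_lim ut' t (- (p t * ut t))).
  { intros t Ht. eapply D_val. apply D_plus; apply D_scal; auto. unfold ut. ring. }
  assert (utpos : forall t, 0 <= t <= x0 -> 0 < ut t).
  { intros t Ht. unfold ut, U. pose proof (u0pos t). pose proof (Fnn t Ht).
    assert (0 < cos th * u0 t) by (apply Rmult_lt_0_compat; auto).
    assert (0 <= sin th * (u0 t * F t)) by (apply Rmult_le_pos; auto; apply Rmult_le_pos; lra). lra. }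
  assert (v0 : v 0 = ut 0).
  { unfold v, ut, U. rewrite h0, w0, u0_0, hF0. replace (0 - th) with (- th) by ring. rewrite cos_neg. ring. }
  assert (v'0 : v' 0 = ut' 0).
  { unfold v', ut', U'. rewrite h0, w0, u0_0, hF0, R0, m0, u0'_0, hF10. replace (0 - th) with (- th) by ring.
    rewrite sin_neg. ring. }
  assert (STURM : forall t1, 0 <= t1 <= x0 -> (forall t, 0 <= t <= t1 -> 0 <= cos (h t - th)) -> ut t1 <= v t1).
  { intros t1 Ht1 Hc. apply (sturm t1 v v' ut ut' q p). lra.
    intros t Ht. assert (Ht' : 0 <= t <= x0) by lra. pose proof (IN t Ht') as Hi.
    refine (conj (dv t Ht') (conj (dv' t Ht') (conj (dut t Hi) (conj (dut' t Hi) (conj (utpos t Ht') (conj _ (qp t Hi))))))).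
    unfold v. apply Rmult_le_pos. left; auto. apply Hc; auto.
    exact v0. exact v'0. }
  assert (ang : forall t, 0 <= t <= x0 -> h t < th + PI / 2).
  { intros t2 Ht2. destruct (Rlt_le_dec (h t2) (th + PI / 2)) as [|Hge]; auto. exfalso.
    assert (PIp : 0 < PI) by apply PI_RGT_0.
    assert (Ht1 : exists t1, 0 <= t1 <= t2 /\ h t1 = th + PI / 2).
    { destruct Hge as [Hgt|Heq]; [|exists t2; split; [lra|auto]].
      assert (t2 <> 0) by (intro; subst; lra).
      assert (Hc : forall a, 0 <= a <= t2 -> continuity_pt (fun s => h s - (th + PI / 2)) a).
      { intros a Ha. apply (D_cont _ _ _ (D_minus _ _ _ _ _ (dh a ltac:(lra)) (D_const (th + PI / 2) a))). }
      destruct (IVT_interv (fun s => h s - (th + PI / 2)) 0 t2 Hc ltac:(lra) ltac:(lra) ltac:(lra)) as [z [Hz Ez]].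
      exists z; split; auto; lra. }
    destruct Ht1 as [t1 [Ht1 Eh]].
    assert (K : ut t1 <= v t1).
    { apply STURM. lra. intros t Ht. apply cos_ge_0.
      assert (h 0 <= h t) by (apply hmono; lra). lra.
      assert (h t <= h t1) by (apply hmono; lra). lra. }
    unfold v in K. rewrite Eh in K. replace (th + PI / 2 - th) with (PI / 2) in K by ring.
    rewrite cos_PI2, Rmult_0_r in K. pose proof (utpos t1 ltac:(lra)). lra. }
  assert (K : ut x0 <= v x0).
  { apply STURM. lra. intros t Ht. apply cos_ge_0.
    assert (h 0 <= h t) by (apply hmono; lra). lra.
    assert (h t < th + PI / 2) by (apply ang; lra). lra. }
  assert (K2 : v x0 <= w x0).
  { unfold v. pose proof (COS_bound (h x0 - th)). pose proof (wpos x0). nra. }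
  assert (Eut : ut x0 = u0 x0 * sqrt (1 + (F x0)²)).
  { unfold ut, U, th. rewrite cos_atan, sin_atan.
    assert (Es : sqrt (1 + (F x0)²) * sqrt (1 + (F x0)²) = 1 + (F x0)²).
    { apply sqrt_sqrt. pose proof (Rle_0_sqr (F x0)); lra. }
    set (S := sqrt (1 + (F x0)²)) in *. replace (u0 x0 * S) with (u0 x0 * (S * S) / S) by (field; lra). rewrite Es. unfold Rsqr. field. lra. }
  pose proof (Apos x0 (IN x0 ltac:(lra))) as HA. pose proof (F1pos x0 (IN x0 ltac:(lra))) as HF.
  assert (Hsq : (u0 x0 * sqrt (1 + (F x0)²)) ^ 2 <= w x0 ^ 2).
  { apply pow_incr. split. left; apply Rmult_lt_0_compat; auto. rewrite <- Eut. lra. }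
  rewrite Rpow_mult_distr, <- Rsqr_pow2 with (x := sqrt _), Rsqr_sqrt in Hsq by (pose proof (Rle_0_sqr (F x0)); lra).
  unfold u0 in Hsq. rewrite L_u0sq in Hsq by auto.
  pose proof (wm x0) as Hwm. rewrite m_eq in Hwm by (apply IN; lra).
  split.
  - unfold normn. fold (A x0). exact partA.
  - unfold normn at 1. fold (A x0). rewrite normn_sq. fold (B x0).
    pose proof (Bnn x0). pose proof (Rle_0_sqr (F x0)).
    replace (F x0 ^ 2) with ((F x0)²) by (unfold Rsqr; ring).
    assert (0 < w x0 ^ 2) by (apply pow_lt; auto).
    assert (Eq : sqrt (A x0) / (1 + B x0) = / w x0 ^ 2) by (apply (Rmult_eq_reg_l (w x0 ^ 2)); [rewrite Hwm; field; apply Rgt_not_eq, wpos|lra]).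
    rewrite Eq. replace (F1 x0 / (1 + (F x0)²)) with (/ (/ F1 x0 * (1 + (F x0)²))) by (field; split; lra).
    apply Rinv_le_contravar; auto. apply Rmult_lt_0_compat. apply Rinv_0_lt_compat; auto. lra.
Qed.

Lemma D_refl f x l : derivable_pt_lim f (- x) l -> derivable_pt_lim (fun t => f (- t)) x (- l).
Proof. intro H. apply (D_val _ _ (l * -1)); [|ring].
  apply (derivable_pt_lim_comp (fun t => - t) f). apply (D_val _ _ (- 1)). apply D_opp, D_id. ring. exact H. Qed.
Lemma inI_opp x : in_I x -> in_I (- x).
Proof. unfold in_I; lra. Qed.
Lemma dotn_opp2 n u v : dotn n (fun i => - u i) (fun i => - v i) = dotn n u v.
Proof. rewrite dotn_opp, dotn_sym, dotn_opp, dotn_sym. ring. Qed.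
Lemma dotn_opp_r n u v : dotn n u (fun i => - v i) = - dotn n u v.
Proof. rewrite dotn_sym, dotn_opp, dotn_sym. ring. Qed.
Lemma normn_opp n u : normn n (fun i => - u i) = normn n u.
Proof. unfold normn. rewrite dotn_opp2. reflexivity. Qed.

Theorem theorem1
  (p : R -> R)
  (hp_pos : forall x, in_I x -> 0 < p x)
  (hp_cont : forall x, in_I x -> continuity_pt p x)
  (hp_even : forall x, in_I x -> p (- x) = p x)
  (hp_disc : disconjugate p)
  (F F1 F2 : R -> R)
  (hF1 : forall x, in_I x -> derivable_pt_lim F x (F1 x))
  (hF2 : forall x, in_I x -> derivable_pt_lim F1 x (F2 x))
  (hF1nz : forall x, in_I x -> F1 x <> 0)
  (hFS : forall x, in_I x -> schwarzian_is F1 F2 x (2 * p x))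
  (hF0 : F 0 = 0) (hF10 : F1 0 = 1) (hF20 : F2 0 = 0)
  (n : nat) (phi phi1 phi2 phi3 : R -> nat -> R)
  (hphi1 : forall i, (i < n)%nat -> forall x, in_I x ->
     derivable_pt_lim (fun t => phi t i) x (phi1 x i))
  (hphi2 : forall i, (i < n)%nat -> forall x, in_I x ->
     derivable_pt_lim (fun t => phi1 t i) x (phi2 x i))
  (hphi3 : forall i, (i < n)%nat -> forall x, in_I x ->
     derivable_pt_lim (fun t => phi2 t i) x (phi3 x i))
  (hphi3c : forall i, (i < n)%nat -> forall x, in_I x ->
     continuity_pt (fun t => phi3 t i) x)
  (hphi1nz : forall x, in_I x -> exists i, (i < n)%nat /\ phi1 x i <> 0)
  (hphi0 : forall i, (i < n)%nat -> phi 0 i = 0)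
  (hphi10 : normn n (phi1 0) = 1)
  (hphi120 : dotn n (phi1 0) (phi2 0) = 0)
  (hS1 : forall x, in_I x ->
     ahlfors_S1 n (phi1 x) (phi2 x) (phi3 x) <= 2 * p x) :
  forall x, in_I x ->
    normn n (phi1 x) <= F1 x /\
    normn n (phi1 x) / (1 + normn n (phi x) ^ 2) <= F1 x / (1 + F x ^ 2).
Proof.
  intros x Hx. destruct (Rle_lt_dec 0 x) as [Hp|Hn].
  - eapply main_pos; eauto. unfold in_I in Hx; lra.
  - assert (M : normn n (fun i => - phi1 (- - x) i) <= F1 (- - x) /\
      normn n (fun i => - phi1 (- - x) i) / (1 + normn n (phi (- - x)) ^ 2) <= F1 (- - x) / (1 + (- F (- - x)) ^ 2)).
    { refine (main_pos (fun t => p (- t)) (fun t => - F (- t)) (fun t => F1 (- t)) (fun t => - F2 (- t))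
        _ _ _ _ _ _ _ n (fun t => phi (- t)) (fun t i => - phi1 (- t) i) (fun t => phi2 (- t))
        (fun t i => - phi3 (- t) i) _ _ _ _ _ _ _ _ (- x) _).
      - intros y Hy. eapply D_val. apply D_opp, D_refl, hF1, inI_opp; auto. ring.
      - intros y Hy. eapply D_val. apply D_refl, hF2, inI_opp; auto. ring.
      - intros y Hy. apply hF1nz, inI_opp; auto.
      - intros y Hy. destruct (hFS (- y) (inI_opp _ Hy)) as [d [Hd Hs]]. exists d. split.
        + apply (derivable_pt_lim_locally_ext (fun t => - (F2 (- t) / F1 (- t))) _ _ (-1) 1).
          exact Hy.
          intros t Ht. field. apply hF1nz, inI_opp. exact Ht.
          eapply D_val. apply D_opp, (D_refl (fun t => F2 t / F1 t)); exact Hd. ring.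
        + rewrite Hs. field. apply hF1nz, inI_opp; auto.
      - rewrite Ropp_0, hF0; ring.
      - rewrite Ropp_0; auto.
      - rewrite Ropp_0, hF20; ring.
      - intros i Hi y Hy. apply (D_refl (fun t => phi t i)). apply hphi1, inI_opp; auto.
      - intros i Hi y Hy. eapply D_val. apply D_opp, (D_refl (fun t => phi1 t i)). apply hphi2, inI_opp; auto. ring.
      - intros i Hi y Hy. apply (D_refl (fun t => phi2 t i)). apply hphi3, inI_opp; auto.
      - intros y Hy. destruct (hphi1nz (- y) (inI_opp _ Hy)) as [i [Hi Hne]]. exists i. split; auto. lra.
      - intros i Hi. rewrite Ropp_0; auto.
      - rewrite normn_opp, Ropp_0; auto.
      - rewrite dotn_opp, Ropp_0, hphi120; ring.
      - intros y Hy. pose proof (hS1 (- y) (inI_opp _ Hy)) as H. unfold ahlfors_S1 in *.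
        rewrite dotn_opp2, dotn_opp, !normn_opp. replace ((- dotn n (phi1 (- y)) (phi2 (- y))) ^ 2) with (dotn n (phi1 (- y)) (phi2 (- y)) ^ 2) by ring. exact H.
      - unfold in_I in Hx; lra. }
    rewrite Ropp_involutive, normn_opp in M. replace ((- F x) ^ 2) with (F x ^ 2) in M by ring. exact M.
Qed.
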